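(* Let $\Omega\subset K$ be a simply connected domain, where $K=\mathbb{C}\setminus(-\infty,0]$. The following are equivalent: (a) there is a conformal map $f\colon\mathbb{H}\to\Omega$ with $\angle\lim_{z\to\infty}f(z)=\infty$ such that $\sqrt f$ is conformal at infinity, where $\sqrt{\cdot}$ is the branch mapping $K$ conformally onto the right half-plane; (b) there is a conformal map $g\colon K\to\Omega$ with $g(\infty)=\infty$ such that $\angle\lim_{w\to\infty}g(w)/w\in\mathbb{C}\setminus\{0\}$ (angular limit in $K$).
   Context: $\mathbb{H}$ is the upper half-plane. For a holomorphic $F\colon\mathbb{H}\to\mathbb{C}$, $\angle\lim_{z\to\infty}F(z)=\ell$ means $F(z)\to\ell$ as $z\to\infty$ within each sector $\{|\arg z-\pi/2|<\theta\}$, $\theta\in(0,\pi/2)$. A holomorphic $F\colon\mathbb{H}\to\mathbb{C}$ with $\angle\lim_{z\to\infty}F(z)=\infty$ is conformal at infinity if $\angle\lim_{z\to\infty}F(z)/z\in\mathbb{C}\setminus\{0\}$. For maps on $K$, angular limits at $\infty$ are taken as $w\to\infty$ within each sector $\{|\arg w|<\theta\}$, $\theta\in(0,\pi)$. *)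

(* Defs.v *)
From Stdlib Require Import Reals.
From Coquelicot Require Import Coquelicot.
Open Scope R_scope.

(* Principal argument, valid (with values in (-PI, PI)) on
   K = C \ (-oo, 0]: Arg w = 2 atan (Im w / (|w| + Re w)). *)
Definition Arg (w : C) : R := 2 * atan (Im w / (Cmod w + Re w)).

Definition Kslit : C -> Prop := fun w => ~ (Im w = 0 /\ Re w <= 0).
Definition Hupper : C -> Prop := fun z => 0 < Im z.

(* Principal branch of the square root on K, mapping K conformally onto
   the right half-plane. *)
Definition Csqrt (w : C) : C :=
  (sqrt (Cmod w) * cos (Arg w / 2), sqrt (Cmod w) * sin (Arg w / 2))%R.

Definition holomorphic_on (U : C -> Prop) (f : C -> C) : Prop :=
  forall z, U z -> ex_derive (K := C_AbsRing) (V := C_NormedModule) f z.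

Definition connected_set (U : C -> Prop) : Prop :=
  (exists z, U z) /\
  forall A B : C -> Prop, open A -> open B ->
    (forall z, U z -> A z \/ B z) ->
    (forall z, U z -> A z -> B z -> False) ->
    (exists z, U z /\ A z) -> (exists z, U z /\ B z) -> False.

Definition is_domain (U : C -> Prop) : Prop := open U /\ connected_set U.

(* Loops/homotopies are given as continuous maps on
   R (resp. R*R), only their values on [0,1] (resp. [0,1]^2) matter. *)
Definition simply_connected (U : C -> Prop) : Prop :=
  forall gamma : R -> C,
    (forall t, continuous gamma t) ->
    (forall t, 0 <= t <= 1 -> U (gamma t)) ->
    gamma 0 = gamma 1 ->
    exists (Hh : R * R -> C) (c : C),
      (forall p, continuous Hh p) /\
      (forall s t, 0 <= s <= 1 -> 0 <= t <= 1 -> U (Hh (s, t))) /\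
      (forall t, 0 <= t <= 1 -> Hh (0, t) = gamma t) /\
      (forall t, 0 <= t <= 1 -> Hh (1, t) = c) /\
      (forall s, 0 <= s <= 1 -> Hh (s, 0) = Hh (s, 1)).

Definition conformal_map (U V : C -> Prop) (f : C -> C) : Prop :=
  holomorphic_on U f /\
  (forall z1 z2, U z1 -> U z2 -> f z1 = f z2 -> z1 = z2) /\
  (forall z, U z -> V (f z)) /\
  (forall w, V w -> exists z, U z /\ f z = w).

Definition sectorH (theta : R) (z : C) : Prop :=
  Hupper z /\ Rabs (Arg z - PI / 2) < theta.
Definition sectorK (theta : R) (w : C) : Prop :=
  Kslit w /\ Rabs (Arg w) < theta.

Definition lim_inf_within (S : C -> Prop) (F : C -> C) (l : C) : Prop :=
  forall eps, 0 < eps -> exists M, forall z, S z -> M < Cmod z ->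
    Cmod (F z - l)%C < eps.
Definition tends_to_inf_within (S : C -> Prop) (F : C -> C) : Prop :=
  forall A, exists M, forall z, S z -> M < Cmod z -> A < Cmod (F z).

Definition angH_lim (F : C -> C) (l : C) : Prop :=
  forall theta, 0 < theta < PI / 2 -> lim_inf_within (sectorH theta) F l.
Definition angH_lim_inf (F : C -> C) : Prop :=
  forall theta, 0 < theta < PI / 2 -> tends_to_inf_within (sectorH theta) F.

Definition angK_lim (F : C -> C) (l : C) : Prop :=
  forall theta, 0 < theta < PI -> lim_inf_within (sectorK theta) F l.
Definition angK_lim_inf (F : C -> C) : Prop :=
  forall theta, 0 < theta < PI -> tends_to_inf_within (sectorK theta) F.

Definition conformal_at_infinity (F : C -> C) : Prop :=
  angH_lim_inf F /\ exists c : C, c <> 0%C /\ angH_lim (fun z => (F z / z)%C) c.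

(* Main.v *)
Require Import Defs.
From Stdlib Require Import Reals Lra Psatz Classical.
From Coquelicot Require Import Coquelicot.
Open Scope R_scope.


Lemma Cmod_sq (w : C) : Cmod w ^ 2 = fst w ^ 2 + snd w ^ 2.
Proof. unfold Cmod. rewrite pow2_sqrt; [lra|nra]. Qed.

Lemma Arg_bound w : -PI < Arg w < PI.
Proof. unfold Arg. pose proof (atan_bound (Im w / (Cmod w + Re w))). lra. Qed.

Lemma K_den w : Kslit w -> 0 < Cmod w + Re w.
Proof.
  intros HK. pose proof (Cmod_sq w). pose proof (Cmod_ge_0 w).
  unfold Kslit in HK. unfold Re, Im in *.
  destruct (Rle_dec (fst w) 0) as [Hle|Hgt].
  - assert (snd w <> 0) by tauto.
    assert (0 < snd w ^ 2) by (pose proof (Rsqr_pos_lt _ H1); unfold Rsqr in *; nra).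
    nra.
  - nra.
Qed.

Lemma polar w : Kslit w -> Re w = Cmod w * cos (Arg w) /\ Im w = Cmod w * sin (Arg w).
Proof.
  intros HK. pose proof (K_den w HK) as Hd. pose proof (Cmod_sq w) as Hm.
  pose proof (Cmod_ge_0 w).
  unfold Arg. set (m := Cmod w) in *. set (x := Re w) in *. set (y := Im w) in *.
  unfold Re, Im in *. fold x y in Hm.
  set (d := m + x) in *.
  set (t := y / d).
  rewrite cos_2a, sin_2a, cos_atan, sin_atan.
  assert (HS : sqrt (1 + t²) * sqrt (1 + t²) = 1 + t²) by (apply sqrt_sqrt; unfold Rsqr; nra).
  assert (HS0 : 0 < sqrt (1 + t²)) by (apply sqrt_lt_R0; unfold Rsqr; nra).
  set (S := sqrt (1 + t²)) in *.
  assert (Hy2 : y^2 = m^2 - x^2) by lra.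
  assert (Hxm : x <= m) by nra.
  assert (Hm0 : 0 < m) by (unfold d in Hd; lra).
  unfold Rsqr in *. subst t.
  split.
  - replace (m * (1 / S * (1 / S) - y / d / S * (y / d / S))) with (m * (d*d - y*y) / (d*d*(S*S))) by (field; lra).
    rewrite HS. unfold d in *.
    assert (Hd2 : (m + x) * (m + x) + y * y = 2 * m * (m+x)) by nra.
    replace ((m + x) * (m + x) * (1 + y / (m + x) * (y / (m + x)))) with ((m+x)*(m+x) + y*y) by (field; lra).
    rewrite Hd2. assert (Hd3 : (m+x)*(m+x) - y*y = 2*x*(m+x)) by nra. rewrite Hd3. field; lra.
  - replace (m * (2 * (y / d / S) * (1 / S))) with (m * 2 * y * d / (d*d*(S*S))) by (field; lra).
    rewrite HS. unfold d in *.
    assert (Hd2 : (m + x) * (m + x) + y * y = 2 * m * (m+x)) by nra.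
    replace ((m + x) * (m + x) * (1 + y / (m + x) * (y / (m + x)))) with ((m+x)*(m+x) + y*y) by (field; lra).
    rewrite Hd2. field; lra.
Qed.

Lemma Cmod_polar r phi : 0 <= r -> Cmod (r * cos phi, r * sin phi) = r.
Proof.
  intros Hr. unfold Cmod; cbn [fst snd].
  replace ((r * cos phi) ^ 2 + (r * sin phi) ^ 2) with (r ^ 2)
    by (pose proof (sin2_cos2 phi); unfold Rsqr in *; nra).
  apply sqrt_pow2; lra.
Qed.

Lemma cos_half_pos phi : -PI < phi < PI -> 0 < cos (phi / 2).
Proof. intros H. apply cos_gt_0; lra. Qed.

Lemma Arg_polar r phi : 0 < r -> -PI < phi < PI -> Arg (r * cos phi, r * sin phi) = phi.
Proof.
  intros Hr Hphi. unfold Arg, Re, Im. rewrite Cmod_polar by lra. simpl.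
  pose proof (cos_half_pos phi Hphi) as Hc.
  replace phi with (2 * (phi / 2)) at 1 2 by field.
  rewrite sin_2a, cos_2a_cos.
  assert (Hden: r + r*(2*cos(phi/2)*cos(phi/2)-1) = 2*r*(cos(phi/2)*cos(phi/2))) by ring.
  rewrite Hden.
  replace (r * (2 * sin (phi / 2) * cos (phi / 2)) / (2 * r * (cos (phi / 2) * cos (phi / 2))))
    with (tan (phi / 2)) by (unfold tan; field; lra).
  rewrite atan_tan by lra. field.
Qed.

Lemma polar_K r phi : 0 < r -> -PI < phi < PI -> Kslit (r * cos phi, r * sin phi).
Proof.
  intros Hr Hphi [Him Hre]. simpl in Him, Hre.
  pose proof (cos_half_pos phi Hphi) as Hc.
  pose proof (sin2_cos2 phi) as H2. unfold Rsqr in H2.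
  assert (sin phi = 0) by (apply Rmult_eq_reg_l with r; lra).
  assert (Hcos : cos phi = 2 * cos (phi/2) * cos (phi/2) - 1)
    by (rewrite <- cos_2a_cos; f_equal; field).
  assert (cos phi <= 0) by nra.
  nra.
Qed.


Lemma K_mod_pos w : Kslit w -> 0 < Cmod w.
Proof.
  intros HK. pose proof (K_den w HK). pose proof (Cmod_sq w). pose proof (Cmod_ge_0 w).
  unfold Re in *. nra.
Qed.

Lemma C_eq (a b : C) : fst a = fst b -> snd a = snd b -> a = b.
Proof. destruct a, b; simpl; intros; subst; auto. Qed.

Lemma Cmult_fst (a b : C) : fst (a * b)%C = fst a * fst b - snd a * snd b.
Proof. destruct a, b; reflexivity. Qed.
Lemma Cmult_snd (a b : C) : snd (a * b)%C = fst a * snd b + snd a * fst b.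
Proof. destruct a, b; reflexivity. Qed.

Lemma Csqrt_sq w : Kslit w -> (Csqrt w * Csqrt w)%C = w.
Proof.
  intros HK. destruct (polar w HK) as [H1 H2]. pose proof (Cmod_ge_0 w).
  assert (Hs : sqrt (Cmod w) * sqrt (Cmod w) = Cmod w) by (apply sqrt_sqrt; lra).
  unfold Re, Im in *.
  apply C_eq; rewrite ?Cmult_fst, ?Cmult_snd; unfold Csqrt; cbn [fst snd].
  - rewrite H1. remember (Arg w / 2) as h eqn:Eh. assert (Hh : Arg w = 2 * h) by lra.
    rewrite Hh, cos_2a. transitivity (sqrt (Cmod w) * sqrt (Cmod w) * (cos h * cos h - sin h * sin h)); [ring | rewrite Hs; ring].
  - rewrite H2. remember (Arg w / 2) as h eqn:Eh. assert (Hh : Arg w = 2 * h) by lra.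
    rewrite Hh, sin_2a. transitivity (sqrt (Cmod w) * sqrt (Cmod w) * (2 * sin h * cos h)); [ring | rewrite Hs; ring].
Qed.

Lemma Csqrt_re_pos w : Kslit w -> 0 < fst (Csqrt w).
Proof.
  intros HK. unfold Csqrt; cbn [fst].
  apply Rmult_lt_0_compat.
  - apply sqrt_lt_R0, K_mod_pos, HK.
  - apply cos_half_pos, Arg_bound.
Qed.

Lemma Cmod_Csqrt w : Cmod (Csqrt w) = sqrt (Cmod w).
Proof. unfold Csqrt. apply Cmod_polar, sqrt_pos. Qed.

Lemma Arg_Csqrt w : Kslit w -> Arg (Csqrt w) = Arg w / 2.
Proof.
  intros HK. unfold Csqrt. apply Arg_polar.
  - apply sqrt_lt_R0, K_mod_pos, HK.
  - pose proof (Arg_bound w); pose proof PI_RGT_0; lra.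
Qed.

Lemma sqrt_unique_C (a s : C) : 0 < fst a -> 0 < fst s -> (a * a)%C = (s * s)%C -> a = s.
Proof.
  intros Ha Hs Heq.
  assert (E1 : fst (a*a)%C = fst (s*s)%C) by (rewrite Heq; auto).
  assert (E2 : snd (a*a)%C = snd (s*s)%C) by (rewrite Heq; auto).
  rewrite !Cmult_fst in E1. rewrite !Cmult_snd in E2.
  destruct a as [a1 a2], s as [s1 s2]; simpl in *.
  assert (Hp : (a1*a1 - s1*s1) * (a1*a1 + s2*s2) = 0).
  { assert (H12: a1*a2 = s1*s2) by lra.
    assert (H3: a1*a1*((a1*a1 - a2*a2) - (s1*s1 - s2*s2)) = 0) by (rewrite E1; ring).
    assert (H4: (a1*a2)*(a1*a2) - (s1*s2)*(s1*s2) = 0) by (rewrite H12; ring).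
    lra. }
  apply Rmult_integral in Hp. destruct Hp as [Hp|Hp]; [|nra].
  assert (a1 = s1) by nra. subst s1.
  assert (a2 = s2) by (apply Rmult_eq_reg_l with (2*a1); lra).
  subst; auto.
Qed.

Lemma Csqrt_unique w s : Kslit w -> 0 < fst s -> (s * s)%C = w -> s = Csqrt w.
Proof.
  intros HK Hs Heq. apply sqrt_unique_C; auto.
  - apply Csqrt_re_pos; auto.
  - rewrite Csqrt_sq; auto.
Qed.


Lemma Cmult_Ci (a : C) : (Ci * a)%C = (- snd a, fst a).
Proof. destruct a as [x y]; unfold Ci; apply C_eq; rewrite ?Cmult_fst, ?Cmult_snd; simpl; ring. Qed.

Lemma Copp_sq_fst (z : C) : fst (- (z * z))%C = snd z * snd z - fst z * fst z.
Proof. destruct z; simpl; ring. Qed.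
Lemma Copp_sq_snd (z : C) : snd (- (z * z))%C = - (2 * fst z * snd z).
Proof. destruct z; simpl; ring. Qed.

Lemma H_to_K z : Hupper z -> Kslit (- (z * z))%C.
Proof.
  unfold Hupper, Kslit, Im, Re. rewrite Copp_sq_fst, Copp_sq_snd. intros Hy [H1 H2].
  assert (fst z = 0) by (apply Rmult_eq_reg_l with (2 * snd z); lra).
  nra.
Qed.

Lemma H_sqrt z : Hupper z -> (Ci * Csqrt (- (z * z)))%C = z.
Proof.
  intros Hz. unfold Hupper, Im in Hz.
  rewrite <- (Csqrt_unique (- (z*z))%C (snd z, - fst z)).
  - rewrite Cmult_Ci. destruct z; simpl; f_equal; ring.
  - apply H_to_K; auto.
  - simpl; auto.
  - destruct z as [x y]; apply C_eq; simpl; ring.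
Qed.

Lemma K_sq w : Kslit w -> (- ((Ci * Csqrt w) * (Ci * Csqrt w)))%C = w.
Proof.
  intros HK. rewrite <- (Csqrt_sq w HK) at 3.
  unfold Ci. destruct (Csqrt w) as [a b]. apply C_eq; simpl; ring.
Qed.

Lemma K_to_H w : Kslit w -> Hupper (Ci * Csqrt w)%C.
Proof.
  intros HK. unfold Hupper, Im. rewrite Cmult_Ci. simpl. apply Csqrt_re_pos; auto.
Qed.

Lemma Cmod_KH w : Cmod (Ci * Csqrt w)%C = sqrt (Cmod w).
Proof. rewrite Cmod_mult. rewrite Cmod_Csqrt. unfold Ci, Cmod; simpl.
  replace (0 * (0 * 1) + 1 * (1 * 1)) with 1 by ring. rewrite sqrt_1. ring. Qed.

Lemma Cmod_HK z : Cmod (- (z * z))%C = Cmod z * Cmod z.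
Proof. rewrite Cmod_opp, Cmod_mult. auto. Qed.

Lemma sector_KH theta w : sectorK theta w -> sectorH (theta / 2) (Ci * Csqrt w)%C.
Proof.
  intros [HK Ht]. split; [apply K_to_H; auto|].
  pose proof (Arg_bound w) as HA.
  assert (Hr : 0 < sqrt (Cmod w)) by (apply sqrt_lt_R0, K_mod_pos, HK).
  assert (E : (Ci * Csqrt w)%C = (sqrt (Cmod w) * cos (Arg w / 2 + PI/2), sqrt (Cmod w) * sin (Arg w / 2 + PI / 2))).
  { rewrite Cmult_Ci. unfold Csqrt; simpl. rewrite cos_plus, sin_plus, cos_PI2, sin_PI2. f_equal; ring. }
  rewrite E, Arg_polar by (auto; lra).
  replace (Arg w / 2 + PI / 2 - PI / 2) with (Arg w / 2) by ring.
  rewrite Rabs_div by lra. rewrite (Rabs_right 2) by lra. lra.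
Qed.

Lemma sector_HK theta z : theta < PI / 2 -> sectorH theta z -> sectorK (2 * theta) (- (z * z))%C.
Proof.
  intros Hth [Hz Ht]. split; [apply H_to_K; auto|].
  assert (HK : Kslit z) by (unfold Kslit, Hupper in *; lra).
  destruct (polar z HK) as [E1 E2].
  pose proof (K_mod_pos z HK) as Hr.
  apply Rabs_lt_between' in Ht.
  assert (E : (- (z * z))%C = (Cmod z * Cmod z * cos (2 * Arg z - PI), Cmod z * Cmod z * sin (2 * Arg z - PI))).
  { rewrite cos_minus, sin_minus, cos_PI, sin_PI, cos_2a, sin_2a.
    apply C_eq; rewrite ?Copp_sq_fst, ?Copp_sq_snd; unfold Re, Im in *; cbn [fst snd]; rewrite E1, E2; ring. }
  rewrite E, Arg_polar by (nra || lra).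
  apply Rabs_def1; lra.
Qed.


Lemma cont_pair_C {T : UniformSpace} (f g : T -> R) (x : T) :
  continuous f x -> continuous g x ->
  continuous (U := C_UniformSpace) (fun y => ((f y, g y) : C)) x.
Proof.
  intros Hf Hg. unfold continuous in *.
  apply filterlim_locally. intros eps.
  apply filterlim_locally with (eps := eps) in Hf.
  apply filterlim_locally with (eps := eps) in Hg.
  generalize (filter_and _ _ Hf Hg). apply filter_imp. intros y [H1 H2].
  split; auto.
Qed.

Lemma cont_fst_C (w : C) : continuous (T := C_UniformSpace) (fun z : C => fst z) w.
Proof. destruct w as [a b]. apply (continuous_fst (U := R_UniformSpace) (V := R_UniformSpace) a b). Qed.
Lemma cont_snd_C (w : C) : continuous (T := C_UniformSpace) (fun z : C => snd z) w.
Proof. destruct w as [a b]. apply (continuous_snd (U := R_UniformSpace) (V := R_UniformSpace) a b). Qed.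

Lemma cont_Cmod (w : C) : continuous (T := C_UniformSpace) Cmod w.
Proof.
  unfold Cmod. apply (continuous_comp (U := C_UniformSpace) (fun z : C => fst z ^ 2 + snd z ^ 2) sqrt).
  - apply (continuous_plus (K := R_AbsRing) (V := R_NormedModule)).
    + simpl. apply (continuous_mult (K := R_AbsRing)); [apply cont_fst_C|].
      apply (continuous_mult (K := R_AbsRing)); [apply cont_fst_C| apply continuous_const].
    + simpl. apply (continuous_mult (K := R_AbsRing)); [apply cont_snd_C|].
      apply (continuous_mult (K := R_AbsRing)); [apply cont_snd_C| apply continuous_const].
  - apply continuous_sqrt.
Qed.

Section CR.
Context {T : UniformSpace}.
Lemma cR_mult (f g : T -> R) x : continuous f x -> continuous g x -> continuous (fun y => f y * g y) x.
Proof. intros; apply (continuous_mult (K := R_AbsRing)); auto. Qed.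
Lemma cR_plus (f g : T -> R) x : continuous f x -> continuous g x -> continuous (fun y => f y + g y) x.
Proof. intros; apply (continuous_plus (K := R_AbsRing) (V := R_NormedModule)); auto. Qed.
Lemma cR_opp (f : T -> R) x : continuous f x -> continuous (fun y => - f y) x.
Proof. intros; apply (continuous_opp (K := R_AbsRing) (V := R_NormedModule)); auto. Qed.
Lemma cR_minus (f g : T -> R) x : continuous f x -> continuous g x -> continuous (fun y => f y - g y) x.
Proof. intros. unfold Rminus. apply cR_plus; auto. apply cR_opp; auto. Qed.
Lemma cR_inv (f : T -> R) x : continuous f x -> f x <> 0 -> continuous (fun y => / f y) x.
Proof. intros. apply (continuous_comp f Rinv); auto. apply continuous_Rinv; auto. Qed.
Lemma cR_comp (f : T -> R) (h : R -> R) x : continuous f x -> continuous h (f x) -> continuous (fun y => h (f y)) x.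
Proof. intros. apply (continuous_comp f h); auto. Qed.
Lemma cR_const (c : R) x : continuous (fun _ : T => c) x.
Proof. apply continuous_const. Qed.
End CR.

Lemma K_iff w : Kslit w <-> 0 < Cmod w + Re w.
Proof.
  split; [apply K_den|]. intros H [H1 H2]. unfold Cmod, Re, Im in *.
  rewrite H1 in H. replace (fst w ^ 2 + 0 ^ 2) with (fst w ^ 2) in H by ring.
  replace (fst w ^ 2) with (Rsqr (fst w)) in H by (unfold Rsqr; ring).
  rewrite sqrt_Rsqr_abs, Rabs_left1 in H by lra. lra.
Qed.

Lemma K_open : open Kslit.
Proof.
  intros w HK. apply K_iff in HK.
  assert (Hc : continuous (T := C_UniformSpace) (fun z => Cmod z + fst z) w)
    by (apply cR_plus; [apply cont_Cmod | apply cont_fst_C]).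
  unfold continuous in Hc.
  apply filterlim_locally with (eps := mkposreal _ HK) in Hc.
  generalize Hc. apply filter_imp. intros y Hy. apply K_iff.
  change (Rabs (Cmod y + fst y - (Cmod w + fst w)) < Cmod w + Re w) in Hy.
  unfold Re in *. apply Rabs_lt_between in Hy. lra.
Qed.

Lemma cont_Arg w : Kslit w -> continuous (T := C_UniformSpace) Arg w.
Proof.
  intros HK. pose proof (K_den w HK). unfold Arg, Re, Im, Rdiv.
  apply cR_mult; [apply cR_const|].
  apply (cR_comp (fun z : C => snd z * / (Cmod z + fst z)) atan); [|apply continuous_atan].
  apply cR_mult; [apply cont_snd_C|].
  apply cR_inv; [|unfold Re in *; lra].
  apply cR_plus; [apply cont_Cmod | apply cont_fst_C].
Qed.

Lemma cont_Csqrt w : Kslit w -> continuous (T := C_UniformSpace) (U := C_UniformSpace) Csqrt w.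
Proof.
  intros HK. unfold Csqrt. apply cont_pair_C.
  - apply cR_mult.
    + apply (cR_comp Cmod sqrt); [apply cont_Cmod | apply continuous_sqrt].
    + apply (cR_comp (fun z => Arg z / 2) cos); [|apply continuous_cos].
      unfold Rdiv. apply cR_mult; [apply cont_Arg; auto | apply cR_const].
  - apply cR_mult.
    + apply (cR_comp Cmod sqrt); [apply cont_Cmod | apply continuous_sqrt].
    + apply (cR_comp (fun z => Arg z / 2) sin); [|apply continuous_sin].
      unfold Rdiv. apply cR_mult; [apply cont_Arg; auto | apply cR_const].
Qed.

Lemma fst_le_Cmod a : fst a <= Cmod a.
Proof. pose proof (re_le_Cmod a). unfold Re in *. pose proof (Rle_abs (fst a)). lra. Qed.

Lemma cont_C_Cmod {T : UniformSpace} (f : T -> C) x :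
  continuous (U := C_UniformSpace) f x ->
  forall eps, 0 < eps -> locally x (fun y => Cmod (f y - f x)%C < eps).
Proof.
  intros Hf eps He. unfold continuous in Hf.
  apply filterlim_locally with (eps := mkposreal (eps/2) ltac:(lra)) in Hf.
  generalize Hf; apply filter_imp. intros y [H1 H2]. simpl in H1, H2.
  change (Rabs (fst (f y) - fst (f x)) < eps / 2) in H1.
  change (Rabs (snd (f y) - snd (f x)) < eps / 2) in H2.
  pose proof (Cmod_2Rmax (f y - f x)%C) as H3.
  assert (E1 : fst (f y - f x)%C = fst (f y) - fst (f x)) by (destruct (f y), (f x); simpl; ring).
  assert (E2 : snd (f y - f x)%C = snd (f y) - snd (f x)) by (destruct (f y), (f x); simpl; ring).
  rewrite E1, E2 in H3.
  assert (Hs : sqrt 2 < 2).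
  { rewrite <- (sqrt_pow2 2) at 2 by lra. apply sqrt_lt_1; lra. }
  pose proof (sqrt_pos 2).
  assert (Rmax (Rabs (fst (f y) - fst (f x))) (Rabs (snd (f y) - snd (f x))) < eps / 2)
    by (apply Rmax_lub_lt; auto).
  assert (0 <= Rmax (Rabs (fst (f y) - fst (f x))) (Rabs (snd (f y) - snd (f x))))
    by (eapply Rle_trans; [apply Rabs_pos| apply Rmax_l]).
  nra.
Qed.

Lemma is_derive_Csqrt w : Kslit w ->
  is_derive (K := C_AbsRing) (V := C_NormedModule) Csqrt w (Cinv (Csqrt w + Csqrt w)).
Proof.
  intros HK. split; [apply is_linear_scal_l|].
  intros x Hx. apply (is_filter_lim_locally_unique (K:=C_AbsRing) (V:=AbsRing_NormedModule C_AbsRing)) in Hx. subst x.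
  intros eps.
  pose proof (Csqrt_re_pos w HK) as Ha.
  set (Sw := Csqrt w) in *.
  assert (Hm : 0 < Cmod Sw) by (pose proof (fst_le_Cmod Sw); lra).
  assert (Hne : (Sw + Sw)%C <> 0%C).
  { intros E. assert (Hf : fst Sw + fst Sw = 0) by (change (fst (Sw + Sw)%C = 0); rewrite E; auto). lra. }
  assert (Hd : 0 < eps * 2 * Cmod Sw * fst Sw). { pose proof (cond_pos eps). apply Rmult_lt_0_compat; [|exact Ha]. apply Rmult_lt_0_compat; [|exact Hm]. lra. }
  apply locally_C.
  generalize (filter_and _ _ (cont_C_Cmod Csqrt w (cont_Csqrt w HK) _ Hd) (K_open w HK)).
  apply filter_imp. intros y [Hy Ky].
  change (Cmod ((Csqrt y - Sw) - (y - w) * Cinv (Sw + Sw))%C <= eps * Cmod (y - w)%C).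
  fold Sw in Hy.
  pose proof (Csqrt_re_pos y Ky) as Hay.
  set (Sy := Csqrt y) in *.
  assert (Ey : y = (Sy * Sy)%C) by (symmetry; apply Csqrt_sq; auto).
  assert (Ew : w = (Sw * Sw)%C) by (symmetry; apply Csqrt_sq; auto).
  assert (E1 : ((Sy - Sw) - (y - w) * Cinv (Sw + Sw))%C = ((Sy - Sw) * (Sw - Sy) / (Sw + Sw))%C).
  { rewrite Ey, Ew. field. auto. }
  assert (E2 : (y - w)%C = ((Sy - Sw) * (Sy + Sw))%C) by (rewrite Ey, Ew; ring).
  rewrite E1, E2, Cmod_div, !Cmod_mult by auto.
  assert (E3 : Cmod (Sw - Sy)%C = Cmod (Sy - Sw)%C).
  { rewrite <- Cmod_opp. f_equal. ring. }
  assert (E4 : Cmod (Sw + Sw)%C = 2 * Cmod Sw).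
  { replace (Sw + Sw)%C with (2 * Sw)%C by ring. rewrite Cmod_mult.
    rewrite Cmod_R, Rabs_right by lra. auto. }
  rewrite E3, E4.
  assert (E5 : fst Sw <= Cmod (Sy + Sw)%C).
  { pose proof (fst_le_Cmod (Sy + Sw)%C) as Hf. change (fst Sy + fst Sw <= Cmod (Sy + Sw)%C) in Hf. lra. }
  pose proof (Cmod_ge_0 (Sy - Sw)%C).
  pose proof (cond_pos eps).
  set (D := Cmod (Sy - Sw)%C) in *.
  apply Rmult_le_reg_r with (2 * Cmod Sw); [lra|].
  field_simplify; [|lra].
  assert (D * D <= D * (eps * 2 * Cmod Sw * fst Sw)) by (apply Rmult_le_compat_l; lra).
  assert (D * (eps * 2 * Cmod Sw * fst Sw) <= D * (eps * 2 * Cmod Sw * Cmod (Sy + Sw)%C)).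
  { apply Rmult_le_compat_l; [lra|]. apply Rmult_le_compat_l; [|lra]. pose proof (cond_pos eps); nra. }
  nra.
Qed.


Lemma dC (f : C -> C) x l : is_derive (K:=C_AbsRing) (V:=C_NormedModule) f x l -> is_derive (K:=C_AbsRing) (V:=AbsRing_NormedModule C_AbsRing) f x l.
Proof. intros [_ H4]. split; [apply is_linear_scal_l | exact H4]. Qed.

Lemma holo_comp (U V : C -> Prop) (f g : C -> C) :
  holomorphic_on U f -> (forall w, V w -> U (g w)) ->
  (forall w, V w -> ex_derive (K:=C_AbsRing) (V:=AbsRing_NormedModule C_AbsRing) g w) ->
  holomorphic_on V (fun w => f (g w)).
Proof.
  intros Hf HU Hg w Hw. apply (ex_derive_comp (K:=C_AbsRing) (V:=C_NormedModule) f g w).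
  - apply Hf, HU, Hw.
  - apply Hg, Hw.
Qed.

Lemma ex_derive_KH w : Kslit w ->
  ex_derive (K:=C_AbsRing) (V:=AbsRing_NormedModule C_AbsRing) (fun w => (Ci * Csqrt w)%C) w.
Proof.
  intros HK. eexists.
  apply (is_derive_mult (K:=C_AbsRing) (fun _ => Ci) Csqrt w).
  - apply (is_derive_const (K:=C_AbsRing) (V:=AbsRing_NormedModule C_AbsRing)).
  - apply dC, is_derive_Csqrt, HK.
  - intros; apply Cmult_comm.
Qed.

Lemma ex_derive_HK z :
  ex_derive (K:=C_AbsRing) (V:=AbsRing_NormedModule C_AbsRing) (fun z => (- (z * z))%C) z.
Proof.
  eexists.
  apply (is_derive_opp (K:=C_AbsRing) (V:=AbsRing_NormedModule C_AbsRing) (fun z => (z * z)%C)).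
  apply (is_derive_mult (K:=C_AbsRing) (fun z => z) (fun z => z) z).
  - apply (is_derive_id (K:=C_AbsRing)).
  - apply (is_derive_id (K:=C_AbsRing)).
  - intros; apply Cmult_comm.
Qed.

Lemma holo_cont (U : C -> Prop) f z : holomorphic_on U f -> U z ->
  continuous (T := C_UniformSpace) (U := C_UniformSpace) f z.
Proof.
  intros Hf Hz. pose proof (ex_derive_continuous (K:=C_AbsRing) (V:=C_NormedModule) f z (Hf z Hz)) as H.
  unfold continuous in *. intros P HP. apply locally_C. apply H. exact HP.
Qed.


Lemma sqrt_gt_sq M x : 0 <= M -> M * M < x -> M < sqrt x.
Proof.
  intros HM Hx. rewrite <- (sqrt_square M) by auto. apply sqrt_lt_1; nra.
Qed.

Lemma sq_close (q c : C) d : Cmod (q - c)%C < d -> d <= 1 ->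
  Cmod (q * q - c * c)%C < d * (1 + 2 * Cmod c).
Proof.
  intros H1 H2.
  replace (q * q - c * c)%C with ((q - c) * (q + c))%C by ring.
  rewrite Cmod_mult.
  assert (Cmod (q + c)%C <= 1 + 2 * Cmod c).
  { replace (q + c)%C with ((q - c) + (c + c))%C by ring.
    eapply Rle_trans; [apply Cmod_triangle|].
    assert (Cmod (c + c)%C <= 2 * Cmod c) by (eapply Rle_trans; [apply Cmod_triangle| lra]).
    lra. }
  pose proof (Cmod_ge_0 (q - c)%C). pose proof (Cmod_ge_0 (q + c)%C). pose proof (Cmod_ge_0 c).
  nra.
Qed.

Lemma C_neq0_sq (c : C) : c <> 0%C -> (c * c)%C <> 0%C.
Proof.
  intros Hc E. apply Cmod_gt_0 in Hc. assert (Cmod (c * c)%C = 0) by (rewrite E; apply Cmod_0).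
  rewrite Cmod_mult in H. nra.
Qed.

Lemma H_neq0 z : Hupper z -> z <> 0%C.
Proof. intros Hz E. rewrite E in Hz. unfold Hupper, Im in Hz. simpl in Hz. lra. Qed.

Lemma dir_ab (Omega : C -> Prop) :
  (forall w, Omega w -> Kslit w) ->
  (exists f : C -> C,
      conformal_map Hupper Omega f /\ angH_lim_inf f /\
      conformal_at_infinity (fun z => Csqrt (f z))) ->
  (exists g : C -> C,
      conformal_map Kslit Omega g /\ angK_lim_inf g /\
      exists c : C, c <> 0%C /\ angK_lim (fun w => (g w / w)%C) c).
Proof.
  intros HOK [f [[Hhol [Hinj [Hmap Hon]]] [Hinf [_ [c [Hc Hlim]]]]]].
  exists (fun w => f (Ci * Csqrt w)%C). split; [|split].
  - split; [|split; [|split]].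
    + apply (holo_comp Hupper Kslit f (fun w => (Ci * Csqrt w)%C)); auto.
      * apply K_to_H.
      * apply ex_derive_KH.
    + intros w1 w2 H1 H2 E. apply Hinj in E; try apply K_to_H; auto.
      rewrite <- (K_sq w1 H1), <- (K_sq w2 H2), E. auto.
    + intros w Hw. apply Hmap, K_to_H, Hw.
    + intros w0 Hw0. destruct (Hon w0 Hw0) as [z [Hz Ez]].
      exists (- (z * z))%C. split; [apply H_to_K; auto|]. rewrite H_sqrt; auto.
  - intros theta Ht A.
    destruct (Hinf (theta / 2) ltac:(lra) A) as [M HM].
    exists (Rmax M 0 * Rmax M 0). intros w Hw HMw.
    apply HM; [apply sector_KH; auto|].
    rewrite Cmod_KH. pose proof (Rmax_l M 0). pose proof (Rmax_r M 0).
    pose proof (sqrt_gt_sq (Rmax M 0) (Cmod w) ltac:(auto) HMw). lra.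
  - exists (- (c * c))%C. split.
    + intros E. apply (C_neq0_sq c Hc). replace (c * c)%C with (- (- (c * c)))%C by ring. rewrite E. ring.
    + intros theta Ht eps Heps.
      pose proof (Cmod_ge_0 c).
      set (d := Rmin 1 (eps / (1 + 2 * Cmod c))).
      assert (Hd0 : 0 < d) by (apply Rmin_pos; [lra| apply Rdiv_lt_0_compat; lra]).
      assert (Hd1 : d <= 1) by apply Rmin_l.
      assert (Hd2 : d * (1 + 2 * Cmod c) <= eps).
      { assert (d <= eps / (1 + 2 * Cmod c)) by apply Rmin_r.
        apply Rmult_le_compat_r with (r := 1 + 2 * Cmod c) in H0; [|lra].
        field_simplify in H0; lra. }
      destruct (Hlim (theta / 2) ltac:(lra) d Hd0) as [M HM].
      exists (Rmax M 0 * Rmax M 0). intros w Hw HMw.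
      set (z := (Ci * Csqrt w)%C).
      assert (Hz : sectorH (theta / 2) z) by (apply sector_KH; auto).
      assert (HMz : M < Cmod z).
      { unfold z. rewrite Cmod_KH. pose proof (Rmax_l M 0). pose proof (Rmax_r M 0).
        pose proof (sqrt_gt_sq (Rmax M 0) (Cmod w) ltac:(auto) HMw). lra. }
      specialize (HM z Hz HMz). simpl in HM.
      destruct Hw as [HK _].
      assert (Hfz : Kslit (f z)) by (apply HOK, Hmap, K_to_H, HK).
      assert (Ew : w = (- (z * z))%C) by (symmetry; apply K_sq; auto).
      assert (Hz0 : z <> 0%C) by (apply H_neq0, K_to_H, HK).
      assert (E : (f z / w)%C = (- ((Csqrt (f z) / z) * (Csqrt (f z) / z)))%C).
      { rewrite Ew. rewrite <- (Csqrt_sq (f z) Hfz) at 1. field. auto. }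
      fold z. rewrite E.
      replace (- (Csqrt (f z) / z * (Csqrt (f z) / z)) - - (c * c))%C
        with (- ((Csqrt (f z) / z * (Csqrt (f z) / z)) - (c * c)))%C by ring.
      rewrite Cmod_opp.
      pose proof (sq_close _ _ _ HM Hd1). lra.
Qed.


Lemma exists_sqrt (u : C) : exists s : C, (s * s)%C = u.
Proof.
  destruct (classic (Kslit u)) as [HK|HK].
  - exists (Csqrt u). apply Csqrt_sq; auto.
  - unfold Kslit in HK. apply NNPP in HK. destruct HK as [H1 H2]. unfold Re, Im in *.
    exists (0, sqrt (- fst u)). destruct u as [a b]; simpl in *. apply C_eq; simpl.
    + pose proof (sqrt_sqrt (-a)). nra.
    + subst; ring.
Qed.

Lemma sign_const (h : R -> R) :
  (forall t, 0 <= t <= 1 -> continuity_pt h t) ->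
  (forall t, 0 <= t <= 1 -> h t <> 0) ->
  (0 < h 0 <-> 0 < h 1).
Proof.
  intros Hc Hn. assert (h0 : h 0 <> 0) by (apply Hn; lra). assert (h1 : h 1 <> 0) by (apply Hn; lra).
  split; intros H.
  - destruct (Rlt_dec 0 (h 1)) as [|Hn1]; auto. exfalso.
    destruct (Ranalysis5.IVT_interv (fun t => - h t) 0 1) as [t [Ht Eh]].
    + intros a Ha. apply continuity_pt_opp, Hc, Ha.
    + lra.
    + lra.
    + lra.
    + apply (Hn t Ht). lra.
  - destruct (Rlt_dec 0 (h 0)) as [|Hn0]; auto. exfalso.
    destruct (Ranalysis5.IVT_interv h 0 1) as [t [Ht Eh]]; auto; try lra.
    apply (Hn t Ht Eh).
Qed.

Lemma in_T_polar theta M r psi : 0 < theta < PI / 2 -> 0 <= M -> M < r ->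
  Rabs (psi - PI / 2) < theta ->
  sectorH theta (r * cos psi, r * sin psi) /\ M < Cmod (r * cos psi, r * sin psi).
Proof.
  intros Ht HM Hr Hp. apply Rabs_lt_between' in Hp.
  rewrite Cmod_polar by lra. split; [|lra]. split.
  - unfold Hupper, Im; simpl. apply Rmult_lt_0_compat; [lra|]. apply sin_gt_0; lra.
  - rewrite Arg_polar by lra. apply Rabs_def1; lra.
Qed.

Lemma cont_path (r a b : R) t :
  continuous (T := R_UniformSpace) (U := C_UniformSpace)
    (fun t => ((r * cos (a + t * b), r * sin (a + t * b)) : C)) t.
Proof.
  apply cont_pair_C.
  - apply cR_mult; [apply cR_const|]. apply (cR_comp (fun t => a + t * b) cos); [|apply continuous_cos].
    apply cR_plus; [apply cR_const|]. apply cR_mult; [apply continuous_id|apply cR_const].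
  - apply cR_mult; [apply cR_const|]. apply (cR_comp (fun t => a + t * b) sin); [|apply continuous_sin].
    apply cR_plus; [apply cR_const|]. apply cR_mult; [apply continuous_id|apply cR_const].
Qed.

Lemma path_sign (Psi : C -> R) theta M (p : R -> C) :
  (forall z, Hupper z -> continuous (T := C_UniformSpace) Psi z) ->
  (forall t, continuous (T := R_UniformSpace) (U := C_UniformSpace) p t) ->
  (forall t, 0 <= t <= 1 -> sectorH theta (p t) /\ M < Cmod (p t)) ->
  (forall z, sectorH theta z -> M < Cmod z -> Psi z <> 0) ->
  (0 < Psi (p 0) <-> 0 < Psi (p 1)).
Proof.
  intros HPsi Hp HT Hn.
  apply (sign_const (fun t => Psi (p t))).
  - intros t Ht. apply continuity_pt_filterlim.
    apply (continuous_comp p Psi); [apply Hp|]. apply HPsi. apply (HT t Ht).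
  - intros t Ht. destruct (HT t Ht) as [H1 H2]. apply Hn; auto.
Qed.

Lemma conn (Psi : C -> R) theta M :
  0 < theta < PI / 2 -> 0 <= M ->
  (forall z, Hupper z -> continuous (T := C_UniformSpace) Psi z) ->
  (forall z, sectorH theta z -> M < Cmod z -> Psi z <> 0) ->
  forall z, sectorH theta z -> M < Cmod z ->
  (0 < Psi z <-> 0 < Psi (0, M + 1)).
Proof.
  intros Ht HM HPsi Hn z Hz HMz.
  assert (HK : Kslit z) by (destruct Hz as [Hz _]; unfold Kslit, Hupper in *; lra).
  destruct (polar z HK) as [E1 E2]. unfold Re, Im in *.
  set (r := Cmod z) in *. set (phi := Arg z) in *.
  pose proof (proj2 Hz) as Hphi. fold phi in Hphi.
  assert (Hcos : cos (PI/2) = 0) by apply cos_PI2.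
  assert (Hsin : sin (PI/2) = 1) by apply sin_PI2.
  assert (S1 : 0 < Psi z <-> 0 < Psi (0, r)).
  { pose proof (path_sign Psi theta M (fun t => ((r * cos (phi + t * (PI/2 - phi)), r * sin (phi + t * (PI/2 - phi))) : C))
      HPsi (fun t => cont_path r phi (PI/2 - phi) t)) as HS. cbv beta in HS.
    replace (phi + 0 * (PI / 2 - phi)) with phi in HS by ring.
    replace (phi + 1 * (PI / 2 - phi)) with (PI / 2) in HS by ring.
    rewrite Hcos, Hsin in HS. replace (r * 0) with 0 in HS by ring. replace (r * 1) with r in HS by ring.
    replace (r * cos phi, r * sin phi) with z in HS by (apply C_eq; simpl; auto).
    apply HS; auto.
    intros t Htt. apply in_T_polar; auto.
    apply Rabs_lt_between' in Hphi. apply Rabs_lt_between'. nra. }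
  assert (S2 : 0 < Psi (0, r) <-> 0 < Psi (0, M + 1)).
  { pose proof (path_sign Psi theta M (fun t => (((r + t * (M + 1 - r)) * cos (PI/2 + t * 0)), ((r + t * (M + 1 - r)) * sin (PI/2 + t * 0))) : C)
      HPsi) as HS. cbv beta in HS.
    replace (PI / 2 + 0 * 0) with (PI / 2) in HS by ring.
    replace (PI / 2 + 1 * 0) with (PI / 2) in HS by ring.
    rewrite Hcos, Hsin in HS.
    replace ((r + 0 * (M + 1 - r)) * 0, (r + 0 * (M + 1 - r)) * 1) with ((0, r) : C) in HS by (apply C_eq; simpl; ring).
    replace ((r + 1 * (M + 1 - r)) * 0, (r + 1 * (M + 1 - r)) * 1) with ((0, M + 1) : C) in HS by (apply C_eq; simpl; ring).
    apply HS; auto.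
    - intros t. apply cont_pair_C.
      + apply cR_mult; [apply cR_plus; [apply cR_const| apply cR_mult; [apply continuous_id| apply cR_const]]|].
        apply (cR_comp (fun t => PI/2 + t*0) cos); [apply cR_plus; [apply cR_const| apply cR_mult; [apply continuous_id| apply cR_const]] | apply continuous_cos].
      + apply cR_mult; [apply cR_plus; [apply cR_const| apply cR_mult; [apply continuous_id| apply cR_const]]|].
        apply (cR_comp (fun t => PI/2 + t*0) sin); [apply cR_plus; [apply cR_const| apply cR_mult; [apply continuous_id| apply cR_const]] | apply continuous_sin].
    - intros t Htt. replace (PI / 2 + t * 0) with (PI / 2) by ring.
      apply in_T_polar; auto.
      + destruct Htt. assert (0 <= (1-t)*(r-M)) by (apply Rmult_le_pos; lra). destruct (Rle_lt_dec t 0); [assert (t = 0) by lra; subst t; lra | lra].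
      + replace (PI / 2 - PI / 2) with 0 by ring. rewrite Rabs_R0. lra. }
  tauto.
Qed.


Lemma cont_sq z : continuous (T := C_UniformSpace) (U := C_UniformSpace) (fun z => (- (z * z))%C) z.
Proof.
  apply (continuous_ext (fun z : C => ((snd z * snd z - fst z * fst z, - (2 * fst z * snd z)) : C))).
  - intros x. apply C_eq; rewrite ?Copp_sq_fst, ?Copp_sq_snd; reflexivity.
  - apply cont_pair_C.
    + apply cR_minus; apply cR_mult; (apply cont_fst_C || apply cont_snd_C).
    + apply cR_opp. apply cR_mult; [apply cR_mult; [apply cR_const| apply cont_fst_C] | apply cont_snd_C].
Qed.

Lemma imag_in_T theta M y : 0 < theta < PI / 2 -> 0 <= M -> M < y ->
  sectorH theta (0, y) /\ M < Cmod (0, y).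
Proof.
  intros Ht HM Hy.
  replace ((0, y) : C) with ((y * cos (PI / 2), y * sin (PI / 2)) : C)
    by (rewrite cos_PI2, sin_PI2; apply C_eq; simpl; ring).
  apply in_T_polar; auto. replace (PI / 2 - PI / 2) with 0 by ring. rewrite Rabs_R0. lra.
Qed.

Section BA.
Variable g : C -> C.
Variable c sigma : C.
Hypothesis Hhol : holomorphic_on Kslit g.
Hypothesis HgK : forall w, Kslit w -> Kslit (g w).
Hypothesis Hlim : angK_lim (fun w => (g w / w)%C) c.
Hypothesis Hsig : (sigma * sigma)%C = (- c)%C.
Hypothesis Hc : c <> 0%C.

Definition Sq z := Csqrt (g (- (z * z))%C).
Definition P z := (Sq z / z)%C.
Definition Phi z := fst (Sq z * (Cconj z * Cconj sigma))%C.

Lemma sig_pos : 0 < Cmod sigma.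
Proof.
  apply Cmod_gt_0. intros E. apply Hc. rewrite E in Hsig.
  replace c with (- (- c))%C by ring. rewrite <- Hsig. ring.
Qed.

Lemma P_sq z : Hupper z -> (P z * P z)%C = (- (g (- (z * z)) / (- (z * z))))%C.
Proof.
  intros Hz. pose proof (H_neq0 z Hz) as Hz0.
  assert (HK : Kslit (- (z * z))%C) by (apply H_to_K; auto).
  assert (Hw0 : (- (z * z))%C <> 0%C) by (intros E; rewrite E in HK; unfold Kslit, Re, Im in HK; simpl in HK; lra).
  unfold P, Sq. pose proof (Csqrt_sq (g (- (z * z))%C) (HgK _ HK)) as Eq.
  set (q := Csqrt (g (- (z * z))%C)) in *. rewrite <- Eq.
  field. auto.
Qed.

Lemma near theta d : 0 < theta < PI / 2 -> 0 < d ->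
  exists M, 1 <= M /\ forall z, sectorH theta z -> M < Cmod z ->
    Cmod (P z - sigma)%C < d \/ Cmod (P z + sigma)%C < d.
Proof.
  intros Ht Hd.
  destruct (Hlim (2 * theta) ltac:(lra) (d * d) ltac:(nra)) as [M1 HM1].
  exists (Rmax M1 1). split; [apply Rmax_r|].
  intros z Hz HMz.
  pose proof (Rmax_l M1 1). pose proof (Rmax_r M1 1).
  assert (Hw : sectorK (2 * theta) (- (z * z))%C) by (apply sector_HK; auto; lra).
  assert (HMw : M1 < Cmod (- (z * z))%C) by (rewrite Cmod_HK; nra).
  specialize (HM1 _ Hw HMw).
  assert (E : ((P z - sigma) * (P z + sigma))%C = (- (g (- (z * z)) / - (z * z) - c))%C).
  { replace ((P z - sigma) * (P z + sigma))%C with (P z * P z - sigma * sigma)%C by ring.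
    rewrite P_sq by (apply Hz). rewrite Hsig. ring. }
  assert (Hp : Cmod (P z - sigma)%C * Cmod (P z + sigma)%C < d * d).
  { rewrite <- Cmod_mult, E, Cmod_opp. auto. }
  pose proof (Cmod_ge_0 (P z - sigma)%C). pose proof (Cmod_ge_0 (P z + sigma)%C).
  destruct (Rlt_dec (Cmod (P z - sigma)%C) d); [left; auto|].
  right. nra.
Qed.

Lemma Phi_P z : Hupper z -> Phi z = Cmod z ^ 2 * fst (P z * Cconj sigma)%C.
Proof.
  intros Hz. pose proof (H_neq0 z Hz) as Hz0.
  unfold Phi.
  assert (E : Sq z = (P z * z)%C) by (unfold P; field; auto).
  rewrite E. rewrite Cmod_sq.
  destruct (P z) as [a b], z as [x y], sigma as [s1 s2]. simpl. ring.
Qed.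

Lemma fst_ge_neg (a : C) : - Cmod a <= fst a.
Proof. pose proof (re_le_Cmod a). unfold Re in *. pose proof (Rabs_pos (fst a)). 
  pose proof (Rabs_le_between' (fst a) 0 (Cmod a)). rewrite Rminus_0_r in H1. lra. Qed.

Lemma Phi_pos z : Hupper z -> Cmod (P z - sigma)%C < Cmod sigma / 2 -> 0 < Phi z.
Proof.
  intros Hz Hd. rewrite Phi_P by auto.
  pose proof (Cmod_gt_0 z) as [Hz0 _]. specialize (Hz0 (H_neq0 z Hz)).
  apply Rmult_lt_0_compat; [nra|].
  replace (P z * Cconj sigma)%C with (sigma * Cconj sigma + (P z - sigma) * Cconj sigma)%C by ring.
  assert (E1 : fst (sigma * Cconj sigma)%C = Cmod sigma ^ 2) by (rewrite Cmod_sq; destruct sigma; simpl; ring).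
  assert (E2 : fst (sigma * Cconj sigma + (P z - sigma) * Cconj sigma)%C =
    fst (sigma * Cconj sigma)%C + fst ((P z - sigma) * Cconj sigma)%C) by reflexivity.
  rewrite E2, E1.
  pose proof (fst_ge_neg ((P z - sigma) * Cconj sigma)%C).
  rewrite Cmod_mult in H. rewrite Cmod_conj in H.
  pose proof sig_pos. pose proof (Cmod_ge_0 (P z - sigma)%C). nra.
Qed.

Lemma Phi_neg z : Hupper z -> Cmod (P z + sigma)%C < Cmod sigma / 2 -> Phi z < 0.
Proof.
  intros Hz Hd. rewrite Phi_P by auto.
  pose proof (Cmod_gt_0 z) as [Hz0 _]. specialize (Hz0 (H_neq0 z Hz)).
  cut (fst (P z * Cconj sigma)%C < 0); [intros HX; rewrite <- (Rmult_0_r (Cmod z ^ 2)); apply Rmult_lt_compat_l; [apply pow_lt; auto | auto]|].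
  replace (P z * Cconj sigma)%C with (- (sigma * Cconj sigma) + (P z + sigma) * Cconj sigma)%C by ring.
  assert (E1 : fst (- (sigma * Cconj sigma))%C = - Cmod sigma ^ 2) by (rewrite Cmod_sq; destruct sigma; simpl; ring).
  assert (E2 : fst (- (sigma * Cconj sigma) + (P z + sigma) * Cconj sigma)%C =
    fst (- (sigma * Cconj sigma))%C + fst ((P z + sigma) * Cconj sigma)%C) by reflexivity.
  rewrite E2, E1.
  pose proof (re_le_Cmod ((P z + sigma) * Cconj sigma)%C). unfold Re in H.
  rewrite Cmod_mult, Cmod_conj in H.
  pose proof (Rle_abs (fst ((P z + sigma) * Cconj sigma)%C)).
  pose proof sig_pos. pose proof (Cmod_ge_0 (P z + sigma)%C). nra.
Qed.

Lemma Phi_cont z : Hupper z -> continuous (T := C_UniformSpace) Phi z.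
Proof.
  intros Hz.
  assert (HK : Kslit (- (z * z))%C) by (apply H_to_K; auto).
  assert (HS : continuous (T := C_UniformSpace) (U := C_UniformSpace) Sq z).
  { unfold Sq. apply (continuous_comp (fun z : C => (- (z * z))%C) (fun w => Csqrt (g w))); [apply cont_sq|].
    apply (continuous_comp g Csqrt); [apply (holo_cont Kslit); auto|].
    apply cont_Csqrt, HgK, HK. }
  apply (continuous_ext (fun z => fst (Sq z) * (fst z * fst sigma - snd z * snd sigma) + snd (Sq z) * (fst z * snd sigma + snd z * fst sigma))).
  - intros x. unfold Phi. destruct (Sq x), x, sigma; simpl; ring.
  - assert (H1 : continuous (T := C_UniformSpace) (fun z => fst (Sq z)) z)
      by (apply (continuous_comp Sq fst); [auto| apply cont_fst_C]).
    assert (H2 : continuous (T := C_UniformSpace) (fun z => snd (Sq z)) z)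
      by (apply (continuous_comp Sq snd); [auto| apply cont_snd_C]).
    apply cR_plus; apply cR_mult; auto.
    + apply cR_minus; apply cR_mult; (apply cont_fst_C || apply cont_snd_C || apply cR_const).
    + apply cR_plus; apply cR_mult; (apply cont_fst_C || apply cont_snd_C || apply cR_const).
Qed.

Lemma key_nz theta : 0 < theta < PI / 2 ->
  exists M, 1 <= M /\ forall z, sectorH theta z -> M < Cmod z -> Phi z <> 0.
Proof.
  intros Ht. pose proof sig_pos.
  destruct (near theta (Cmod sigma / 2) Ht ltac:(lra)) as [M [HM1 HM]].
  exists M. split; auto. intros z Hz HMz.
  destruct (HM z Hz HMz) as [H1|H1].
  - apply Rgt_not_eq. apply Phi_pos; auto. apply Hz.
  - apply Rlt_not_eq. apply Phi_neg; auto. apply Hz.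
Qed.

Lemma P_lim : exists tau : C, tau <> 0%C /\ angH_lim P tau.
Proof.
  pose proof sig_pos as Hs.
  assert (Hpi : 0 < PI / 4 < PI / 2) by (pose proof PI_RGT_0; lra).
  destruct (key_nz (PI / 4) Hpi) as [M0 [HM0 Hn0]].
  set (zs := ((0, M0 + 1) : C)).
  destruct (Rlt_dec 0 (Phi zs)) as [Hpos|Hneg].
  - exists sigma. split; [intros E; rewrite E, Cmod_0 in Hs; lra|].
    intros theta Ht eps Heps.
    destruct (key_nz theta Ht) as [Mt [HMt Hnt]].
    destruct (near theta (Rmin (Cmod sigma / 2) eps) Ht ltac:(apply Rmin_pos; lra)) as [Md [HMd Hd]].
    exists (Rmax (Rmax Md Mt) M0). intros z Hz HMz.
    pose proof (Rmax_l (Rmax Md Mt) M0). pose proof (Rmax_r (Rmax Md Mt) M0).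
    pose proof (Rmax_l Md Mt). pose proof (Rmax_r Md Mt).
    pose proof (Rmin_l (Cmod sigma / 2) eps). pose proof (Rmin_r (Cmod sigma / 2) eps).
    set (u := ((0, Rmax Mt M0 + 1) : C)).
    pose proof (Rmax_l Mt M0). pose proof (Rmax_r Mt M0).
    destruct (imag_in_T theta Mt (Rmax Mt M0 + 1) Ht ltac:(lra) ltac:(lra)) as [Hu1 Hu2].
    destruct (imag_in_T (PI / 4) M0 (Rmax Mt M0 + 1) Hpi ltac:(lra) ltac:(lra)) as [Hu3 Hu4].
    pose proof (conn Phi theta Mt Ht ltac:(lra) Phi_cont Hnt z Hz ltac:(lra)) as C1.
    pose proof (conn Phi theta Mt Ht ltac:(lra) Phi_cont Hnt u Hu1 Hu2) as C2.
    pose proof (conn Phi (PI / 4) M0 Hpi ltac:(lra) Phi_cont Hn0 u Hu3 Hu4) as C3.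
    fold zs in C3.
    assert (Hz0 : 0 < Phi z) by tauto.
    destruct (Hd z Hz ltac:(lra)) as [Hd1|Hd1]; [lra|].
    exfalso. pose proof (Phi_neg z (proj1 Hz) ltac:(lra)). lra.
  - exists (- sigma)%C. split; [intros E; apply (proj2 (Cmod_gt_0 sigma) Hs); replace sigma with (- - sigma)%C by ring; rewrite E; ring|].
    intros theta Ht eps Heps.
    destruct (key_nz theta Ht) as [Mt [HMt Hnt]].
    destruct (near theta (Rmin (Cmod sigma / 2) eps) Ht ltac:(apply Rmin_pos; lra)) as [Md [HMd Hd]].
    exists (Rmax (Rmax Md Mt) M0). intros z Hz HMz.
    pose proof (Rmax_l (Rmax Md Mt) M0). pose proof (Rmax_r (Rmax Md Mt) M0).
    pose proof (Rmax_l Md Mt). pose proof (Rmax_r Md Mt).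
    pose proof (Rmin_l (Cmod sigma / 2) eps). pose proof (Rmin_r (Cmod sigma / 2) eps).
    set (u := ((0, Rmax Mt M0 + 1) : C)).
    pose proof (Rmax_l Mt M0). pose proof (Rmax_r Mt M0).
    destruct (imag_in_T theta Mt (Rmax Mt M0 + 1) Ht ltac:(lra) ltac:(lra)) as [Hu1 Hu2].
    destruct (imag_in_T (PI / 4) M0 (Rmax Mt M0 + 1) Hpi ltac:(lra) ltac:(lra)) as [Hu3 Hu4].
    pose proof (conn Phi theta Mt Ht ltac:(lra) Phi_cont Hnt z Hz ltac:(lra)) as C1.
    pose proof (conn Phi theta Mt Ht ltac:(lra) Phi_cont Hnt u Hu1 Hu2) as C2.
    pose proof (conn Phi (PI / 4) M0 Hpi ltac:(lra) Phi_cont Hn0 u Hu3 Hu4) as C3.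
    fold zs in C3.
    assert (Hz0 : ~ 0 < Phi z) by tauto.
    destruct (Hd z Hz ltac:(lra)) as [Hd1|Hd1].
    + exfalso. pose proof (Phi_pos z (proj1 Hz) ltac:(lra)). lra.
    + replace (P z - - sigma)%C with (P z + sigma)%C by ring. lra.
Qed.

End BA.


Lemma dir_ba (Omega : C -> Prop) :
  (forall w, Omega w -> Kslit w) ->
  (exists g : C -> C,
      conformal_map Kslit Omega g /\ angK_lim_inf g /\
      exists c : C, c <> 0%C /\ angK_lim (fun w => (g w / w)%C) c) ->
  (exists f : C -> C,
      conformal_map Hupper Omega f /\ angH_lim_inf f /\
      conformal_at_infinity (fun z => Csqrt (f z))).
Proof.
  intros HOK [g [[Hhol [Hinj [Hmap Hon]]] [Hinf [c [Hc Hlim]]]]].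
  assert (HgK : forall w, Kslit w -> Kslit (g w)) by (intros; apply HOK, Hmap; auto).
  assert (Hfinf : angH_lim_inf (fun z => g (- (z * z))%C)).
  { intros theta Ht A.
    destruct (Hinf (2 * theta) ltac:(lra) A) as [M HM].
    exists (Rmax M 1). intros z Hz HMz.
    pose proof (Rmax_l M 1). pose proof (Rmax_r M 1).
    apply HM; [apply sector_HK; auto; lra|].
    rewrite Cmod_HK. nra. }
  exists (fun z => g (- (z * z))%C). split; [|split].
  - split; [|split; [|split]].
    + apply (holo_comp Kslit Hupper g (fun z => (- (z * z))%C)); auto.
      * apply H_to_K.
      * intros; apply ex_derive_HK.
    + intros z1 z2 H1 H2 E. apply Hinj in E; try apply H_to_K; auto.
      rewrite <- (H_sqrt z1 H1), <- (H_sqrt z2 H2), E. auto.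
    + intros z Hz. apply Hmap, H_to_K, Hz.
    + intros w0 Hw0. destruct (Hon w0 Hw0) as [w [Hw Ew]].
      exists (Ci * Csqrt w)%C. split; [apply K_to_H; auto|]. rewrite K_sq; auto.
  - exact Hfinf.
  - split.
    + intros theta Ht A.
      destruct (Hfinf theta Ht (Rmax A 0 * Rmax A 0)) as [M HM].
      exists M. intros z Hz HMz. rewrite Cmod_Csqrt.
      pose proof (Rmax_l A 0). pose proof (Rmax_r A 0).
      pose proof (sqrt_gt_sq (Rmax A 0) _ ltac:(auto) (HM z Hz HMz)). lra.
    + destruct (exists_sqrt (- c)%C) as [sigma Hsig].
      destruct (P_lim g c sigma Hhol HgK Hlim Hsig Hc) as [tau [Htau Hl]].
      exists tau. split; auto.
Qed.

Theorem lemma5p8 (Omega : C -> Prop) :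
  is_domain Omega -> simply_connected Omega ->
  (forall w, Omega w -> Kslit w) ->
  ((exists f : C -> C,
      conformal_map Hupper Omega f /\ angH_lim_inf f /\
      conformal_at_infinity (fun z => Csqrt (f z)))
   <->
   (exists g : C -> C,
      conformal_map Kslit Omega g /\ angK_lim_inf g /\
      exists c : C, c <> 0%C /\ angK_lim (fun w => (g w / w)%C) c)).
Proof.
  intros _ _ HOK. split; [apply dir_ab | apply dir_ba]; auto.
Qed.
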